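(* Let $a=(a_2,\dots,a_k)$ be nonnegative integers with $\sum_{i=2}^k ia_i=2^t$ for some $t\ge 1$. Then \[ \binom{|a|}{a}\equiv\sum_{j=1}^{\lfloor k/2\rfloor}\binom{|a|-1}{\hat a_{2j}}\pmod 2 . \]
   Context: $|a|=a_2+\dots+a_k$, $\binom{|a|}{a}=\frac{|a|!}{a_2!\cdots a_k!}$, $\hat a_j=(a_2,\dots,a_j-1,\dots,a_k)$; the multinomial coefficient of a tuple with a negative entry is defined to be $0$. *)

(* Defs.v *)
From mathcomp Require Import all_boot.
Set Implicit Arguments. Unset Strict Implicit. Unset Printing Implicit Defensive.

(* A tuple a = (a_2,...,a_k) is represented by a function a : nat -> nat;
   only the values a 2, ..., a k are used. *)

Definition tsize (k : nat) (a : nat -> nat) : nat := \sum_(2 <= i < k.+1) a i.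

Definition multinom (k : nat) (a : nat -> nat) : nat :=
  (tsize k a)`! %/ \prod_(2 <= i < k.+1) (a i)`!.

(* multinomial coefficient of hat a_j = (a_2,...,a_j - 1,...,a_k);
   it is 0 when a_j - 1 is negative (i.e. a_j = 0). Its top entry is
   |hat a_j| = |a| - 1. *)
Definition multinom_hat (k : nat) (a : nat -> nat) (j : nat) : nat :=
  if a j == 0 then 0
  else multinom k (fun i => if i == j then (a i).-1 else a i).

(* Main.v *)
Require Import Defs.
From mathcomp Require Import all_boot zify.

Lemma prod_fact_dvd_l (a : nat -> nat) m l :
  \prod_(m <= i < m + l) (a i)`! %| (\sum_(m <= i < m + l) a i)`!.
Proof.
elim: l => [|l IH]; first by rewrite addn0 !big_geq.
rewrite addnS !big_nat_recr ?leq_addr //=.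
set S := \sum_(_ <= _ < _) _.
have <- : 'C(S + a (m + l), S) * (S`! * (a (m + l))`!) = (S + a (m + l))`!.
  by have := @bin_fact (S + a (m + l)) S (leq_addr _ _); rewrite addKn.
by apply: dvdn_mull; apply: dvdn_mul.
Qed.

Lemma prod_fact_dvd (a : nat -> nat) m n :
  \prod_(m <= i < n) (a i)`! %| (\sum_(m <= i < n) a i)`!.
Proof.
case: (leqP m n) => H; last by rewrite !big_geq // ltnW.
by rewrite -(subnKC H); apply: prod_fact_dvd_l.
Qed.

Lemma multinomE (k : nat) (a : nat -> nat) : multinom k a * \prod_(2 <= i < k.+1) (a i)`! = (Defs.tsize k a)`!.
Proof. by rewrite /multinom divnK // prod_fact_dvd. Qed.

Lemma key (k : nat) (a : nat -> nat) (j : nat) : 2 <= j <= k ->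
  multinom_hat k a j * Defs.tsize k a = multinom k a * a j.
Proof.
move=> /andP [j2 jk].
rewrite /multinom_hat; case: eqP => [->|/eqP aj0]; first by rewrite muln0.
set b := fun i => if i == j then (a i).-1 else a i.
have jin : j \in index_iota 2 k.+1 by rewrite mem_index_iota j2 ltnS.
have eqr : forall (F G : nat -> nat) (op : SemiGroup.com_law nat) x,
    (forall i, i != j -> F i = G i) ->
    \big[op/x]_(i <- index_iota 2 k.+1 | i != j) F i =
    \big[op/x]_(i <- index_iota 2 k.+1 | i != j) G i.
  by move=> F G op x FG; apply: eq_bigr => i /FG.
have bo : forall i, i != j -> b i = a i by move=> i /negbTE; rewrite /b => ->.
have hs : Defs.tsize k a = (Defs.tsize k b).+1.
  rewrite /Defs.tsize !(bigD1_seq j) ?iota_uniq //= (eqr b a _ _ bo) /b eqxx.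
  by rewrite -addSn prednK ?lt0n.
have aj1 : (a j).-1.+1 = a j by rewrite prednK ?lt0n.
have hp : \prod_(2 <= i < k.+1) (a i)`! = a j * \prod_(2 <= i < k.+1) (b i)`!.
  rewrite !(bigD1_seq j) ?iota_uniq //= (eqr (fun i => (b i)`!) (fun i => (a i)`!)); last first.
    by move=> i /bo ->.
  by rewrite /b eqxx mulnA -{2}aj1 -factS aj1.
have Ea := multinomE k a. have Eb := multinomE k b.
rewrite hs factS -Eb hp in Ea.
have Pb : 0 < \prod_(2 <= i < k.+1) (b i)`! by apply: prodn_gt0 => i; apply: fact_gt0.
apply/eqP; rewrite -(eqn_pmul2r Pb) -[multinom k a * _ * _]mulnA Ea hs.
by rewrite mulnA [_ * (Defs.tsize k b).+1]mulnC.
Qed.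

Lemma odd_ext (r : seq nat) (F G : nat -> nat) :
  (forall i, odd (F i) = odd (G i)) ->
  odd (\sum_(i <- r) F i) = odd (\sum_(i <- r) G i).
Proof.
move=> FG; elim: r => [|x r IH]; first by rewrite !big_nil.
by rewrite !big_cons !oddD FG IH.
Qed.

Lemma reindex_even (F : nat -> nat) k :
  \sum_(2 <= j < k.+1) (if ~~ odd j then F j else 0) =
  \sum_(1 <= j < (k./2).+1) F (2 * j).
Proof.
elim: k => [|k IH]; first by rewrite !big_geq.
case: k IH => [|k] IH; first by rewrite !big_geq.
rewrite big_nat_recr // IH -uphalfE uphalf_half /= !negbK.
have hk := odd_double_half k.
case: (odd k) hk => /= hk; first by rewrite add1n addn0.
rewrite add0n [in RHS]big_nat_recr //; congr (_ + F _).
by move: hk; rewrite add0n -muln2; lia.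
Qed.

Theorem mainTheorem7 (k t : nat) (a : nat -> nat) :
  1 <= t ->
  \sum_(2 <= i < k.+1) i * a i = 2 ^ t ->
  multinom k a = \sum_(1 <= j < (k./2).+1) multinom_hat k a (2 * j) %[mod 2].
Proof.
move=> t1 hsum.
set n := Defs.tsize k a; set M := multinom k a; set H := multinom_hat k a.
have n2 : 2 * n <= 2 ^ t.
  rewrite -hsum /n /Defs.tsize big_distrr /= big_seq [X in _ <= X]big_seq.
  apply: leq_sum => i; rewrite mem_index_iota => /andP [i2 _].
  by rewrite leq_mul2r i2 orbT.
have nk : 2 ^ t <= k * n.
  rewrite -hsum /n /Defs.tsize big_distrr /= big_seq [X in _ <= X]big_seq.
  apply: leq_sum => i; rewrite mem_index_iota => /andP [_ ik].
  by rewrite leq_mul2r -ltnS ik orbT.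
have npos : 0 < n.
  have h0 : 0 < 2 ^ t by rewrite expn_gt0.
  by have := leq_trans h0 nk; rewrite muln_gt0 => /andP [].
have keyS : forall F : nat -> nat,
    \sum_(2 <= j < k.+1) F j * (H j * n) = M * \sum_(2 <= j < k.+1) F j * a j.
  move=> F; rewrite big_distrr /= big_seq [X in _ = X]big_seq.
  apply: eq_bigr => j; rewrite mem_index_iota => /andP [j2 jk].
  have jr : 2 <= j <= k by rewrite j2 -ltnS.
  by rewrite /H (key k a j jr) mulnCA.
have hM : M = \sum_(2 <= j < k.+1) H j.
  have e := keyS (fun _ => 1).
  have e1 : \sum_(2 <= j < k.+1) 1 * (H j * n) = \sum_(2 <= j < k.+1) H j * n.
    by apply: eq_bigr => j _; rewrite mul1n.
  have e2 : \sum_(2 <= j < k.+1) 1 * a j = n.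
    by rewrite /n /Defs.tsize; apply: eq_bigr => j _; rewrite mul1n.
  rewrite e1 e2 in e.
  apply/eqP; rewrite -(eqn_pmul2r npos) big_distrl; apply/eqP; rewrite -e.
  by [].
set X := \sum_(2 <= j < k.+1) j * H j.
have Xn : X * n = M * 2 ^ t.
  rewrite -hsum -(keyS (fun j => j)) /X big_distrl.
  by apply: eq_bigr => j _; rewrite mulnA.
have Xeven : ~~ odd X.
  apply/negP => oX.
  have : 2 ^ t %| n.
    rewrite -(@Gauss_dvdr _ X); first by rewrite Xn dvdn_mull.
    by apply: coprimeXl; rewrite coprime2n.
  move/(dvdn_leq npos) => h.
  have h2 := leq_trans n2 h.
  by clear -h2 npos; lia.
rewrite !modn2; congr (nat_of_bool _).
rewrite -(reindex_even H k) -(addbF (odd M)) -(negbTE Xeven) -oddD hM /X -big_split /=.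
apply: odd_ext => j; rewrite oddD oddM.
by case: (odd j); case: (odd (H j)).
Qed.
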